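(* Let $r\ge1$. The constructions $(Q,E)\mapsto X_{(Q,E)}$ and $X\mapsto(Q_X,E_X)$ (defined in the context) give a one-to-one correspondence, up to isomorphism, between $r$-VASSes and $\mathcal V_r$-presheaves $X$ that are finitely generated and have no double edges, i.e. such that for all $\mathsf u\in\mathbb Z^r$ and distinct $e_1,e_2\in X[(\mathsf u,\mathsf 0)]$ one has $X[(\sigma_{\mathsf u},\iota_{\mathsf 0}^{\mathsf 0})](e_1)\ne X[(\sigma_{\mathsf u},\iota_{\mathsf 0}^{\mathsf 0})](e_2)$ or $X[(\tau_{\mathsf u},\iota_{\mathsf 0}^{\mathsf 0})](e_1)\ne X[(\tau_{\mathsf u},\iota_{\mathsf 0}^{\mathsf 0})](e_2)$. That is, $(Q_{X_{(Q,E)}},E_{X_{(Q,E)}})$ is isomorphic to $(Q,E)$ for every $r$-VASS, and $X\cong X_{(Q_X,E_X)}$ for every such presheaf $X$.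
   Context: An $r$-VASS is a pair $(Q,E)$ with $Q$ a finite set and $E\subseteq Q\times\mathbb Z^r\times Q$ finite; write $e=(\mathrm{src}(e),\mathrm{vec}(e),\mathrm{tgt}(e))$. For an alphabet $\Sigma$ not containing the symbol $\emptyset$, $\mathcal G(\Sigma)$ is the category with objects $\{\emptyset\}\cup\Sigma$, only identity endomorphisms, $\mathcal G(\emptyset,a)=\{\sigma_a,\tau_a\}$ and $\mathcal G(a,\emptyset)=\emptyset$ for $a\in\Sigma$, and no morphisms between distinct letters. For a set $A$, $\mathcal F(A)$ is the category with object set $A$ and exactly one morphism $\iota_a^b:a\to b$ for all $a,b\in A$. $\mathcal V_r$ is the category $\mathcal G(\mathbb Z^r)\times\mathcal F(\mathbb N^r)$ (with d-structure: formorphisms the identities and the $(\sigma_{\mathsf u},\iota^{\mathsf v}_{\mathsf u^-+\mathsf v}):(\emptyset,\mathsf u^-+\mathsf v)\to(\mathsf u,\mathsf v)$, backmorphisms the identities and $(\tau_{\mathsf u},\iota^{\mathsf v}_{\mathsf u^++\mathsf v}):(\emptyset,\mathsf u^++\mathsf v)\to(\mathsf u,\mathsf v)$, where $\mathsf u=\mathsf u^+-\mathsf u^-$ with $\mathsf u^\pm\in\mathbb N^r$ the positive and negative parts). A $\mathcal V_r$-presheaf is a functor $X:\mathcal V_r^{op}\to\mathbf{Set}$; it is finitely generated if $X\cong\operatorname{colim}_{e\in\mathcal E}\mathcal V_r(-,G(e))$ for some finite category $\mathcal E$ and functor $G:\mathcal E\to\mathcal V_r$. For an $r$-VASS $(Q,E)$,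 $X_{(Q,E)}$ is given by $X[(\emptyset,\mathsf v)]=Q\times\{\mathsf v\}$, $X[(\mathsf u,\mathsf v)]=\{(e,\mathsf v)\mid e\in E,\mathrm{vec}(e)=\mathsf u\}$, $X[(\mathrm{id}_\emptyset,\iota_{\mathsf w}^{\mathsf v})](q,\mathsf v)=(q,\mathsf w)$, $X[(\mathrm{id}_{\mathsf u},\iota_{\mathsf w}^{\mathsf v})](e,\mathsf v)=(e,\mathsf w)$, $X[(\sigma_{\mathsf u},\iota_{\mathsf w}^{\mathsf v})](e,\mathsf v)=(\mathrm{src}(e),\mathsf w)$, $X[(\tau_{\mathsf u},\iota_{\mathsf w}^{\mathsf v})](e,\mathsf v)=(\mathrm{tgt}(e),\mathsf w)$. For a $\mathcal V_r$-presheaf $X$, $Q_X=X[(\emptyset,\mathsf 0)]$ and $E_X=\bigcup_{\mathsf u\in\mathbb Z^r}\{(X[(\sigma_{\mathsf u},\iota_{\mathsf 0}^{\mathsf 0})](e),\mathsf u,X[(\tau_{\mathsf u},\iota_{\mathsf 0}^{\mathsf 0})](e))\mid e\in X[(\mathsf u,\mathsf 0)]\}$. *)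

(* Defs.v *)
From mathcomp Require Import all_boot all_order all_algebra.
Set Implicit Arguments. Unset Strict Implicit. Unset Printing Implicit Defensive.

Definition Zr (r : nat) := {ffun 'I_r -> int}.
Definition Nr (r : nat) := {ffun 'I_r -> nat}.
Definition N0 (r : nat) : Nr r := [ffun _ => 0%N].

(* membership in a list, for types without decidable equality *)
Fixpoint inl {T : Type} (x : T) (s : seq T) : Prop :=
  match s with [::] => False | y :: s' => y = x \/ inl x s' end.

Record vass (r : nat) := Vass { vQ : Type ; vE : vQ * Zr r * vQ -> Prop }.
Arguments vE {r} v _.

Definition is_vass r (V : vass r) : Prop :=
  (exists s : seq (vQ V), forall q, inl q s) /\
  (exists s : seq (vQ V * Zr r * vQ V), forall e, vE V e -> inl e s).

Definition vass_iso r (V W : vass r) : Prop :=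
  exists f : vQ V -> vQ W, bijective f /\
    forall q u q', vE V (q, u, q') <-> vE W (f q, u, f q').

(* objects: None = the empty-word object, Some a = the letter a *)
Inductive Gmor {Z : Type} : option Z -> option Z -> Type :=
| Gid (a : option Z) : Gmor a a
| Gsig (u : Z) : Gmor None (Some u)
| Gtau (u : Z) : Gmor None (Some u).

Definition gcomp {Z : Type} {a b c : option Z} (h : Gmor b c) : Gmor a b -> Gmor a c :=
  match h in Gmor b c return Gmor a b -> Gmor a c with
  | Gid _ => fun g => g
  | Gsig u => fun g =>
      match g in Gmor a' b' return
            (match b' with None => Gmor a' (Some u) | Some _ => unit end) with
      | Gid x => match x as x0 return
                   (match x0 with None => Gmor x0 (Some u) | Some _ => unit end) with
                 | None => Gsig u | Some _ => tt end
      | Gsig _ => tt | Gtau _ => tt end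
  | Gtau u => fun g =>
      match g in Gmor a' b' return
            (match b' with None => Gmor a' (Some u) | Some _ => unit end) with
      | Gid x => match x as x0 return
                   (match x0 with None => Gmor x0 (Some u) | Some _ => unit end) with
                 | None => Gtau u | Some _ => tt end
      | Gsig _ => tt | Gtau _ => tt end
  end.

Inductive Fmor {A : Type} (a b : A) : Type := Iota.

Definition Vobj (r : nat) := (option (Zr r) * Nr r)%type.
Definition Vmor r (A B : Vobj r) := (Gmor A.1 B.1 * Fmor A.2 B.2)%type.
Definition vid r (A : Vobj r) : Vmor A A := (Gid A.1, Iota A.2 A.2).
Definition vcomp r (A B C : Vobj r) (h : Vmor B C) (g : Vmor A B) : Vmor A C :=
  (gcomp h.1 g.1, Iota A.2 C.2).

Definition sig0 r (u : Zr r) : Vmor (None, N0 r) (Some u, N0 r) := (Gsig u, Iota _ _).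
Definition tau0 r (u : Zr r) : Vmor (None, N0 r) (Some u, N0 r) := (Gtau u, Iota _ _).

Record psh (r : nat) := Psh {
  ob : Vobj r -> Type ;
  act : forall A B : Vobj r, Vmor A B -> ob B -> ob A }.
Arguments act {r} p {A B}.
Arguments ob {r} p _.

Definition is_presheaf r (X : psh r) : Prop :=
  (forall A (x : ob X A), act X (vid A) x = x) /\
  (forall A B C (g : Vmor A B) (h : Vmor B C) (x : ob X C),
      act X (vcomp h g) x = act X g (act X h x)).

Definition nat_trans r (X Y : psh r) (th : forall A, ob X A -> ob Y A) : Prop :=
  forall A B (f : Vmor A B) (x : ob X B), th A (act X f x) = act Y f (th B x).

Definition psh_iso r (X Y : psh r) : Prop :=
  exists th : forall A, ob X A -> ob Y A, nat_trans th /\ forall A, bijective (th A).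

Definition yon r (B : Vobj r) : psh r :=
  @Psh r (fun A => Vmor A B) (fun A C (g : Vmor A C) (f : Vmor C B) => vcomp f g).

Record fcat := FCat {
  cob : finType ;
  chom : cob -> cob -> finType ;
  cid : forall a, chom a a ;
  ccomp : forall a b c, chom b c -> chom a b -> chom a c }.

Definition is_cat (C : fcat) : Prop :=
  (forall (a b : cob C) (f : chom a b), ccomp (cid b) f = f) /\
  (forall (a b : cob C) (f : chom a b), ccomp f (cid a) = f) /\
  (forall (a b c d : cob C) (f : chom a b) (g : chom b c) (h : chom c d),
      ccomp h (ccomp g f) = ccomp (ccomp h g) f).

Record diag (r : nat) (C : fcat) := Diag {
  dob : cob C -> Vobj r ;
  dmor : forall a b, chom a b -> Vmor (dob a) (dob b) }.

Definition is_functor r C (G : diag r C) : Prop :=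
  (forall a, dmor G (cid a) = vid (dob G a)) /\
  (forall a b c (f : chom a b) (g : chom b c),
      dmor G (ccomp g f) = vcomp (dmor G g) (dmor G f)).

Definition cocone r C (G : diag r C) (Y : psh r)
    (lam : forall c A, Vmor A (dob G c) -> ob Y A) : Prop :=
  (forall c, nat_trans (X := yon (dob G c)) (lam c)) /\
  (forall c c' (k : chom c c') A (f : Vmor A (dob G c)),
      lam c A f = lam c' A (vcomp (dmor G k) f)).

Definition is_colimit r C (G : diag r C) (X : psh r)
    (lam : forall c A, Vmor A (dob G c) -> ob X A) : Prop :=
  cocone lam /\
  forall (Y : psh r) (mu : forall c A, Vmor A (dob G c) -> ob Y A),
    is_presheaf Y -> cocone mu ->
    (exists th : forall A, ob X A -> ob Y A,
        nat_trans th /\ forall c A f, th A (lam c A f) = mu c A f) /\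
    (forall th th' : forall A, ob X A -> ob Y A,
        nat_trans th -> (forall c A f, th A (lam c A f) = mu c A f) ->
        nat_trans th' -> (forall c A f, th' A (lam c A f) = mu c A f) ->
        forall A x, th A x = th' A x).

Definition fin_gen r (X : psh r) : Prop :=
  exists (C : fcat) (G : diag r C) (lam : forall c A, Vmor A (dob G c) -> ob X A),
    is_cat C /\ is_functor G /\ is_colimit lam.

Definition no_double_edges r (X : psh r) : Prop :=
  forall (u : Zr r) (e1 e2 : ob X (Some u, N0 r)), e1 <> e2 ->
    act X (sig0 u) e1 <> act X (sig0 u) e2 \/ act X (tau0 u) e1 <> act X (tau0 u) e2.

Definition XVob r (V : vass r) (a : option (Zr r)) (v : Nr r) : Type :=
  match a with
  | None => {p : vQ V * Nr r | p.2 = v}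
  | Some u => {p : (vQ V * Zr r * vQ V) * Nr r |
                 vE V p.1 /\ p.1.1.2 = u /\ p.2 = v}
  end.

Definition XVact r (V : vass r) (A B : Vobj r) (f : Vmor A B) :
    XVob V B.1 B.2 -> XVob V A.1 A.2 :=
  let w := A.2 in let v := B.2 in
  match f.1 in Gmor a b return XVob V b v -> XVob V a w with
  | Gid c =>
      match c as c0 return XVob V c0 v -> XVob V c0 w with
      | None => fun x => exist _ ((sval x).1, w) erefl
      | Some u => fun x => exist _ ((sval x).1, w)
          (conj (proj1 (proj2_sig x)) (conj (proj1 (proj2 (proj2_sig x))) erefl))
      end
  | Gsig u => fun x => exist _ ((sval x).1.1.1, w) erefl
  | Gtau u => fun x => exist _ ((sval x).1.2, w) erefl
  end.

Definition XV r (V : vass r) : psh r :=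
  @Psh r (fun A => XVob V A.1 A.2) (@XVact r V).

Definition VX r (X : psh r) : vass r :=
  @Vass r (ob X (None, N0 r))
    (fun t => exists e : ob X (Some t.1.2, N0 r),
        act X (sig0 t.1.2) e = t.1.1 /\ act X (tau0 t.1.2) e = t.2).

(* Main.v *)
Require Import Defs.
From mathcomp Require Import all_boot all_order all_algebra.
From Stdlib Require Import ProofIrrelevance ClassicalEpsilon Classical Program.Equality.
Set Implicit Arguments. Unset Strict Implicit. Unset Printing Implicit Defensive.

Lemma sig_eq {T : Type} {P : T -> Prop} (x y : {t | P t}) : sval x = sval y -> x = y.
Proof. case: x y => [x px] [y py] /= E; subst; f_equal; apply proof_irrelevance. Qed.

Lemma inl_map {A B} (f : A -> B) x s : inl x s -> inl (f x) (map f s).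
Proof. elim: s => //= y s IH [->|H]; [by left | by right; apply: IH]. Qed.

Lemma inl_cat1 {A} (x : A) s t : inl x s -> inl x (s ++ t).
Proof. elim: s => //= y s IH [->|H]; [by left | by right; apply: IH]. Qed.

Lemma inl_cat2 {A} (x : A) s t : inl x t -> inl x (s ++ t).
Proof. by elim: s => //= y s IH H; right; apply: IH. Qed.

Lemma inl_flatten {T : eqType} {A} (F : T -> seq A) (s : seq T) c x :
  c \in s -> inl x (F c) -> inl x (flatten (map F s)).
Proof.
elim: s => //= d s IH; rewrite in_cons => /orP [/eqP ->|H] Hx.
  exact: inl_cat1.
apply: inl_cat2; exact: IH.
Qed.

Unset Implicit Arguments.
Section Img.
Variable r : nat.
Variable X : psh r.
Hypothesis HX : is_presheaf X.
Variables (C : fcat) (G : diag r C) (lam : forall c A, Vmor A (dob G c) -> ob X A).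
Hypothesis Hcol : is_colimit lam.

Definition imgP {A} (x : ob X A) := exists c f, lam c A f = x.

Lemma imgP_act A B (g : Vmor A B) x : imgP x -> imgP (act X g x).
Proof.
move=> [c [f <-]]; exists c, (vcomp f g).
have := (proj1 (proj1 Hcol) c) A B g f; rewrite /= => ->. by [].
Qed.

Definition Img : psh r :=
  @Psh r (fun A => {x : ob X A | imgP x})
    (fun A B g y => exist _ (act X g (sval y)) (imgP_act A B g (sval y) (proj2_sig y))).

Lemma Img_psh : is_presheaf Img.
Proof.
split.
- move=> A x; apply: sig_eq => /=; exact: (proj1 HX).
- move=> A B C' g h x; apply: sig_eq => /=; exact: (proj2 HX).
Qed.

Lemma lam_surj A (x : ob X A) : imgP x.
Proof.
pose mu c A f : ob Img A := exist _ (lam c A f) (ex_intro _ c (ex_intro _ f erefl)).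
have Hmu : cocone mu.
  split.
  - move=> c A' B g f; apply: sig_eq => /=; exact: (proj1 (proj1 Hcol)).
  - move=> c c' k A' f; apply: sig_eq => /=; exact: (proj2 (proj1 Hcol)).
have [[th [thn thl]] _] := (proj2 Hcol) Img mu Img_psh Hmu.
have [_ U] := (proj2 Hcol) X lam HX (proj1 Hcol).
have := U (fun A x => sval (th A x)) (fun A x => x).
have n1 : nat_trans (fun A x => sval (th A x)).
  by move=> A' B f y /=; rewrite thn.
move=> /(_ n1) H; rewrite -(H _ _ _ A x).
- exact: (proj2_sig (th A x)).
- by move=> c A' f /=; rewrite thl.
- by [].
- by [].
Qed.

Definition Glist (B : Vobj r) : seq (Vmor (None, N0 r) B) :=
  match B as B0 return seq (Vmor (None, N0 r) B0) with
  | (None, v) => [:: (Gid None, Iota (N0 r) v)]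
  | (Some u, v) => [:: (Gsig u, Iota (N0 r) v); (Gtau u, Iota (N0 r) v)]
  end.

Lemma Glist_all B (f : Vmor (None, N0 r) B) : inl f (Glist B).
Proof.
case: B f => b v [g []]; simpl in g; dependent destruction g; simpl; tauto.
Qed.

Definition Elist (B : Vobj r) (l : forall A, Vmor A B -> ob X A) :
    seq (vQ (VX X) * Zr r * vQ (VX X)) :=
  match B as B0 return (forall A, Vmor A B0 -> ob X A) -> seq _ with
  | (Some u, w) => fun l =>
      let e := l (Some u, N0 r) (Gid (Some u), Iota (N0 r) w) in
      [:: (act X (sig0 u) e, u, act X (tau0 u) e)]
  | (None, _) => fun _ => [::]
  end l.

Lemma Elist_all B (l : forall A, Vmor A B -> ob X A) u (f : Vmor (Some u, N0 r) B) :
  inl (act X (sig0 u) (l _ f), u, act X (tau0 u) (l _ f)) (Elist B l).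
Proof.
case: B l f => b w l [g []]; simpl in g; dependent destruction g; simpl; tauto.
Qed.

Lemma VX_vass : is_vass (VX X).
Proof.
split.
- exists (flatten (map (fun c => map (lam c (None, N0 r)) (Glist (dob G c))) (enum (cob C)))).
  move=> q; have [c [f <-]] := lam_surj _ q.
  apply: (inl_flatten (c:=c)); first by rewrite mem_enum.
  apply: inl_map; exact: Glist_all.
- exists (flatten (map (fun c => Elist (dob G c) (lam c)) (enum (cob C)))).
  move=> [[q u] q'] [e [/= H1 H2]].
  have [c [f E]] := lam_surj _ e.
  apply: (inl_flatten (c:=c)); first by rewrite mem_enum.
  rewrite -H1 -H2 -E; exact: Elist_all.
Qed.

End Img.

Set Implicit Arguments.

Lemma inj_surj_bij {A B : Type} (f : A -> B) :
  injective f -> (forall y, exists x, f x = y) -> bijective f.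
Proof.
move=> fi fs.
pose g y := proj1_sig (constructive_indefinite_description _ (fs y)).
have Hg y : f (g y) = y by rewrite /g; case: constructive_indefinite_description.
exists g => // x; apply: fi; exact: Hg.
Qed.

Section P2.
Variable r : nat.
Variable X : psh r.
Hypothesis HX : is_presheaf X.

Lemma actC A B C (g : Vmor A B) (h : Vmor B C) x :
  act X g (act X h x) = act X (vcomp h g) x.
Proof. by rewrite (proj2 HX). Qed.

Definition th (A : Vobj r) : ob X A -> ob (XV (VX X)) A :=
  match A as A0 return ob X A0 -> XVob (VX X) A0.1 A0.2 with
  | (None, v) => fun x => exist (fun p : vQ (VX X) * Nr r => p.2 = v)
        (act X ((Gid None, Iota (N0 r) v) : Vmor (None, N0 r) (None, v)) x, v) erefl
  | (Some u, v) => fun x =>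
      let e := act X ((Gid (Some u), Iota (N0 r) v) : Vmor (Some u, N0 r) (Some u, v)) x in
      exist (fun p : (vQ (VX X) * Zr r * vQ (VX X)) * Nr r =>
                 vE (VX X) p.1 /\ p.1.1.2 = u /\ p.2 = v)
        ((act X (sig0 u) e, u, act X (tau0 u) e), v)
        (conj (ex_intro _ e (conj erefl erefl)) (conj erefl erefl))
  end.

Lemma th_nat_aux (a b : option (Zr r)) (g : Gmor a b) (w v : Nr r) (x : ob X (b, v)) :
  th (act X (A := (a, w)) (B := (b, v)) (g, Iota w v) x) =
  act (XV (VX X)) (A := (a, w)) (B := (b, v)) (g, Iota w v) (th x).
Proof.
destruct g as [[u|]|u|u]; apply: sig_eq => /=; rewrite !actC //.
Qed.

Lemma th_nat : nat_trans th.
Proof.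
move=> [a w] [b v] [g []] x; exact: th_nat_aux.
Qed.

Lemma actid a v (x : ob X (a, v)) :
  act X (A := (a, v)) (B := (a, v)) (Gid a, Iota v v) x = x.
Proof. exact: (proj1 HX (a, v) x). Qed.

Hypothesis ND : no_double_edges X.

Lemma mv_inj a v (x1 x2 : ob X (a, v)) :
  act X (A := (a, N0 r)) (B := (a, v)) (Gid a, Iota (N0 r) v) x1 =
  act X (A := (a, N0 r)) (B := (a, v)) (Gid a, Iota (N0 r) v) x2 -> x1 = x2.
Proof.
move=> E.
have := congr1 (act X (A := (a, v)) (B := (a, N0 r)) (Gid a, Iota v (N0 r))) E.
by rewrite !actC /= !actid.
Qed.

Lemma th_bij A : bijective (th (A := A)).
Proof.
case: A => [[u|] v]; apply: inj_surj_bij.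
- move=> x1 x2 /(congr1 sval) /= E; apply: (mv_inj (a := Some u)).
  set e1 := act X _ x1 in E *; set e2 := act X _ x2 in E *.
  apply: NNPP => ne; case: (ND ne) => H; apply: H.
  + by have := congr1 (fun p => p.1.1.1) E.
  + by have := congr1 (fun p => p.1.2) E.
- move=> [[[[q u'] q'] v'] [[e [H1 H2]] [/= E1 E2]]].
  subst => /=.
  exists (act X (A := (Some u, v)) (B := (Some u, N0 r)) (Gid (Some u), Iota v (N0 r)) e).
  apply: sig_eq => /=.
  have -> : act X (A := (Some u, N0 r)) (B := (Some u, v)) (Gid (Some u), Iota (N0 r) v)
     (act X (A := (Some u, v)) (B := (Some u, N0 r)) (Gid (Some u), Iota v (N0 r)) e) = e.
    by rewrite actC /= actid.
  by simpl in H1, H2; rewrite H1 H2.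
- move=> x1 x2 /(congr1 sval) /= E; apply: (mv_inj (a := None)).
  by have := congr1 fst E.
- move=> [[q v'] /= E]; subst v'.
  exists (act X (A := (None, v)) (B := (None, N0 r)) (Gid None, Iota v (N0 r)) q).
  by apply: sig_eq => /=; rewrite actC /= actid.
Qed.

End P2.


Definition cb (P : Prop) : bool := if excluded_middle_informative P then true else false.
Lemma cbP P : reflect P (cb P).
Proof. rewrite /cb; case: excluded_middle_informative => H; by constructor. Qed.

Lemma inl_nth T (s : seq T) x : inl x s -> exists n, n < size s /\ forall d, nth d s n = x.
Proof.
elim: s => //= y s IH [->|/IH [n [H1 H2]]]; first by exists 0.
by exists n.+1.
Qed.

Lemma can_ex T (s : seq T) x : inl x s ->
  exists i : 'I_(size s), tnth (in_tuple s) i = x /\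
    forall j : 'I_(size s), j < i -> tnth (in_tuple s) j <> tnth (in_tuple s) i.
Proof.
move=> Hs; have Hn := inl_nth Hs.
have Hc : exists n, cb (n < size s /\ forall d, nth d s n = x).
  by case: Hn => n Hn; exists n; apply/cbP.
case: (ex_minnP Hc) => m /cbP [Hm Hx] Hmin.
exists (Ordinal Hm); split.
  by rewrite (tnth_nth x) /= Hx.
move=> j Hj; rewrite (tnth_nth x) (tnth_nth x) /= Hx => E.
have := Hmin j; rewrite ltnNge in Hj.
have -> : cb (j < size s /\ (forall d, nth d s j = x)) = true.
  apply/cbP; split => // d; rewrite -E; exact: set_nth_default.
by move=> /(_ isT); rewrite (negbTE Hj).
Qed.

Lemma can_uniq T (s : seq T) (i i' : 'I_(size s)) :
  (forall j : 'I_(size s), j < i -> tnth (in_tuple s) j <> tnth (in_tuple s) i) ->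
  (forall j : 'I_(size s), j < i' -> tnth (in_tuple s) j <> tnth (in_tuple s) i') ->
  tnth (in_tuple s) i = tnth (in_tuple s) i' -> i = i'.
Proof.
move=> H1 H2 E; case: (ltngtP i i') => H.
- by case: (H2 _ H).
- by case: (H1 _ H); rewrite E.
- exact: val_inj.
Qed.

Lemma colim_crit r (X : psh r) (C : fcat) (G : diag r C)
  (lam : forall c A, Vmor A (dob G c) -> ob X A) :
  cocone lam -> (forall A x, exists c f, lam c A f = x) ->
  (forall (Y : psh r) (mu : forall c A, Vmor A (dob G c) -> ob Y A), cocone mu ->
     forall c c' A f f', lam c A f = lam c' A f' -> mu c A f = mu c' A f') ->
  is_colimit lam.
Proof.
move=> Hl Hs Hr; split => // Y mu HY Hmu.
have pick A x : {cf : {c : cob C & Vmor A (dob G c)} | lam (projT1 cf) A (projT2 cf) = x}.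
  apply: constructive_indefinite_description.
  have [c [f E]] := Hs A x; by exists (existT _ c f).
split.
- exists (fun A x => mu (projT1 (sval (pick A x))) A (projT2 (sval (pick A x)))); split.
  + move=> A B g x; case: (pick B x) => [[c f] E] /=.
    case: (pick A (act X g x)) => [[c' f'] E'] /=.
    rewrite (Hr Y mu Hmu c' c A f' (vcomp f g)).
      exact: ((proj1 Hmu) c A B g f).
    rewrite E' -E; symmetry; exact: ((proj1 Hl) c A B g f).
  + move=> c A f; case: pick => [[c' f'] E] /=; exact: Hr.
- move=> th th' _ H1 _ H2 A x; have [c [f <-]] := Hs A x; by rewrite H1 H2.
Qed.

Section P1.
Variable r : nat.
Variable V : vass r.

Lemma XV_comp_aux a b c (g : Gmor a b) (h : Gmor b c) w v z (x : XVob V c z) :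
  XVact (A := (a, w)) (B := (c, z)) (gcomp h g, Iota w z) x =
  XVact (A := (a, w)) (B := (b, v)) (g, Iota w v)
    (XVact (A := (b, v)) (B := (c, z)) (h, Iota v z) x).
Proof.
destruct h as [[u|]|u|u].
all: dependent destruction g; try (apply: sig_eq => //).
Qed.

Lemma XV_psh : is_presheaf (XV V).
Proof.
split.
- move=> [[u|] w] [p pf]; simpl; apply: sig_eq => /=.
  + by case: p pf => [p w'] /= [_ [_ ->]].
  + by case: p pf => [p w'] /= ->.
- move=> [a w] [b v] [c z] [g []] [h []] x; exact: XV_comp_aux.
Qed.

Lemma XV_nde : no_double_edges (XV V).
Proof.
move=> u [[[[s u1] t] w1] p1] [[[[s' u2] t'] w2] p2] ne.
apply: NNPP => H; apply: ne; apply: sig_eq => /=.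
have [H1 H2] : s = s' /\ t = t'.
  split; apply: NNPP => H'; apply: H; [left|right] => E; apply: H';
  by have := congr1 (fun x => (sval x).1) E.
clear H; case: p1 p2 => [_ [/= -> ->]] [_ [/= -> ->]]; by rewrite H1 H2.
Qed.

Lemma XV_iso : vass_iso (VX (XV V)) V.
Proof.
exists (fun q => (sval q).1); split.
  exists (fun q => exist (fun p : vQ V * Nr r => p.2 = N0 r) (q, N0 r) erefl) => //.
  by move=> [[q w] /= E]; apply: sig_eq => /=; rewrite E.
move=> q u q'; split.
- move=> [[[[[s u'] t] w] [Hv [/= Eu Ew]]] [/= H1 H2]].
  by subst u'; rewrite -H1 -H2.
- move=> Hv.
  exists (exist (fun p : (vQ V * Zr r * vQ V) * Nr r => vE V p.1 /\ p.1.1.2 = u /\ p.2 = N0 r)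
           (((sval q).1, u, (sval q').1), N0 r) (conj Hv (conj erefl erefl))).
  split; apply: sig_eq => /=.
  + by case: q {Hv} => [[q0 w] /= ->].
  + by case: q' {Hv} => [[q0 w] /= ->].
Qed.

Definition idG (u u' : Zr r) (H : u = u') : Gmor (Some u) (Some u') :=
  eq_rect u (fun u' => Gmor (Some u) (Some u')) (Gid (Some u)) u' H.

Lemma idG_id u (H : u = u) : idG H = Gid (Some u).
Proof. by rewrite (eq_irrelevance H erefl). Qed.

Section Fin.
Variables (sQ : seq (vQ V)) (sE : seq (vQ V * Zr r * vQ V)).
Hypotheses (hQ : forall q, inl q sQ) (hE : forall e, vE V e -> inl e sE).

Definition qa (i : 'I_(size sQ)) := tnth (in_tuple sQ) i.
Definition canQ : pred 'I_(size sQ) :=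
  fun i => cb (forall j : 'I_(size sQ), j < i -> qa j <> qa i).
Definition ea (k : 'I_(size sE)) := tnth (in_tuple sE) k.
Definition canE : pred 'I_(size sE) :=
  fun k => cb (vE V (ea k) /\ forall j : 'I_(size sE), j < k -> ea j <> ea k).

Definition SQ : finType := {i : 'I_(size sQ) | canQ i}.
Definition SE : finType := {k : 'I_(size sE) | canE k}.
Definition Ob : finType := (SQ + SE)%type.

Definition qs (i : SQ) := qa (val i).
Definition es (k : SE) := ea (val k).
Definition uk (k : SE) := (es k).1.2.

Lemma es_vE k : vE V (es k).
Proof. case: k => k Hk; rewrite /es /=; by case/cbP: Hk. Qed.

Lemma SQ_ex q : exists i : SQ, qs i = q.
Proof.
have [i [E H]] := can_ex (hQ q).
have Hi : canQ i by apply/cbP.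
by exists (exist _ i Hi).
Qed.

Lemma SQ_uniq (i i' : SQ) : qs i = qs i' -> i = i'.
Proof.
case: i i' => [i Hi] [i' Hi'] E; rewrite /qs /= in E; apply: val_inj => /=.
apply: (can_uniq (s := sQ)) E; [exact/cbP | exact/cbP].
Qed.

Lemma SE_ex e : vE V e -> exists k : SE, es k = e.
Proof.
move=> He; have [k [E H]] := can_ex (hE He).
have Hk : canE k by apply/cbP; split => //; rewrite /ea E.
by exists (exist _ k Hk).
Qed.

Lemma SE_uniq (k k' : SE) : es k = es k' -> k = k'.
Proof.
case: k k' => [k Hk] [k' Hk'] E; rewrite /es /= in E; apply: val_inj => /=.
move/cbP: Hk => [_ Hk]; move/cbP: Hk' => [_ Hk'].
exact: (can_uniq (s := sE)) E.
Qed.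

Definition homP (a b : Ob) (x : bool) : bool :=
  match a, b with
  | Datatypes.inl i, Datatypes.inl j => ~~ x && (i == j)
  | Datatypes.inr k, Datatypes.inr l => ~~ x && (k == l)
  | Datatypes.inl i, Datatypes.inr k => if x then cb ((es k).2 = qs i) else cb ((es k).1.1 = qs i)
  | Datatypes.inr _, Datatypes.inl _ => false
  end.

Definition Hom (a b : Ob) : finType := {x : bool | homP a b x}.

Lemma id_ok a : homP a a false.
Proof. by case: a => x /=. Qed.

Definition hid (a : Ob) : Hom a a := exist _ false (id_ok a).

Lemma comp_ok a b c x y : homP b c x -> homP a b y ->
  homP a c (if b is Datatypes.inl _ then x else y).
Proof.
case: a => [i|k]; case: b => [j|l]; case: c => [j2|l2] //=.
- by move=> /andP [Hx /eqP <-] /andP [_ /eqP ->]; rewrite Hx eqxx.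
- by move=> H /andP [_ /eqP ->].
- by move=> /andP [_ /eqP <-] H.
- by move=> /andP [_ /eqP <-] /andP [Hy /eqP ->]; rewrite Hy eqxx.
Qed.

Definition hcomp (a b c : Ob) (h : Hom b c) (g : Hom a b) : Hom a c :=
  exist (fun x => homP a c x) _ (comp_ok (valP h) (valP g)).

Definition Cat : fcat := @FCat Ob Hom hid hcomp.

Lemma Cat_is_cat : is_cat Cat.
Proof.
split; [|split].
- move=> a b [x Hx]; apply: val_inj => /=.
  by case: b Hx => // j; case: a => [i|k] //= /andP [/negbTE ->].
- move=> a b [x Hx]; apply: val_inj => /=.
  by case: a Hx => // k; case: b => [j|l] //= /andP [/negbTE ->].
- move=> a b c d [x Hx] [y Hy] [z Hz]; apply: val_inj => /=.
  by case: b c Hx Hy Hz => [j|l] [j2|l2].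
Qed.

Definition dob0 (a : Ob) : Vobj r :=
  match a with Datatypes.inl _ => (None, N0 r) | Datatypes.inr k => (Some (uk k), N0 r) end.

Lemma homEE k l x : homP (Datatypes.inr k) (Datatypes.inr l) x -> uk k = uk l.
Proof. by move=> /andP [_ /eqP ->]. Qed.

Lemma homES k i (f : Hom (Datatypes.inr k) (Datatypes.inl i)) : False.
Proof. by case: f. Qed.

Definition dmor0 (a b : Ob) : Hom a b -> Vmor (dob0 a) (dob0 b) :=
  match a as a0, b as b0 return Hom a0 b0 -> Vmor (dob0 a0) (dob0 b0) with
  | Datatypes.inl i, Datatypes.inl j => fun _ => (Gid None, Iota (N0 r) (N0 r))
  | Datatypes.inr k, Datatypes.inr l => fun f => (idG (homEE (valP f)), Iota (N0 r) (N0 r))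
  | Datatypes.inl i, Datatypes.inr k => fun f =>
      (if val f then Gtau (uk k) else Gsig (uk k), Iota (N0 r) (N0 r))
  | Datatypes.inr k, Datatypes.inl i => fun f => False_rect _ (homES f)
  end.

Definition Dg : diag r Cat := @Diag r Cat dob0 dmor0.

Lemma gcomp_idG_sig u u' (H : u = u') : gcomp (idG H) (Gsig u) = Gsig u'.
Proof. by destruct H. Qed.
Lemma gcomp_idG_tau u u' (H : u = u') : gcomp (idG H) (Gtau u) = Gtau u'.
Proof. by destruct H. Qed.
Lemma gcomp_idG2 u1 u2 u3 (H1 : u1 = u2) (H2 : u2 = u3) (H3 : u1 = u3) :
  gcomp (idG H2) (idG H1) = idG H3.
Proof. destruct H1, H2; by rewrite (eq_irrelevance H3 erefl). Qed.

Lemma Dg_functor : is_functor Dg.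
Proof.
split.
- case=> [i|k] //=; by rewrite idG_id.
- case=> [i|k]; case=> [j|l]; case=> [j2|l2] f g.
  all: try (by case: (homES f)).
  all: try (by case: (homES g)).
  all: case: f g => [x Hx] [y Hy] /=.
  + reflexivity.
  + by case: y {Hy}.
  + by case: x {Hx}; rewrite /vcomp /= ?gcomp_idG_sig ?gcomp_idG_tau.
  + rewrite /vcomp /=; f_equal; symmetry; apply: gcomp_idG2.
Qed.

Definition elt (c : Ob) : XVob V (dob0 c).1 (dob0 c).2 :=
  match c as c0 return XVob V (dob0 c0).1 (dob0 c0).2 with
  | Datatypes.inl i => exist (fun p : vQ V * Nr r => p.2 = N0 r) (qs i, N0 r) erefl
  | Datatypes.inr k => exist (fun p : (vQ V * Zr r * vQ V) * Nr r =>
                           vE V p.1 /\ p.1.1.2 = uk k /\ p.2 = N0 r)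
                         (es k, N0 r) (conj (es_vE k) (conj erefl erefl))
  end.

Definition lamV (c : Ob) (A : Vobj r) (f : Vmor A (dob0 c)) : ob (XV V) A :=
  XVact f (elt c).
Arguments lamV : clear implicits.

Lemma elt_compat c c' (k : Hom c c') : XVact (dmor0 k) (elt c') = elt c.
Proof.
move: c c' k; case=> [i|k]; case=> [j|l] h; try (by case: (homES h)).
all: case: h => [x Hx].
- have E : i = j by move: Hx => /andP [_ /eqP].
  subst j; by apply: sig_eq.
- case: x Hx => Hx; apply: sig_eq => /=.
  + have E : (es l).2 = qs i by apply/cbP.
    by rewrite E.
  + have E : (es l).1.1 = qs i by apply/cbP.
    by rewrite E.
- have E : k = l by move: Hx => /andP [_ /eqP].
  subst l; simpl; rewrite idG_id; by apply: sig_eq.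
Qed.

Lemma lamV_cocone : @cocone r Cat Dg (XV V) lamV.
Proof.
split.
- move=> c A B g f; exact: (proj2 XV_psh).
- move=> c c' k A f; rewrite /lamV; symmetry.
  etransitivity; first exact: ((proj2 XV_psh) _ _ _ f (dmor0 k) (elt c')).
  by rewrite /= elt_compat.
Qed.

Lemma XVact_idG u u' (H : u = u') w v (x : XVob V (Some u') v) :
  sval (XVact (A := (Some u, w)) (B := (Some u', v)) (idG H, Iota w v) x) = ((sval x).1, w).
Proof. by destruct H. Qed.

Lemma lamV_surj A x : exists c (f : Vmor A (dob0 c)), lamV c A f = x.
Proof.
case: A x => [[u|] w] [[p w'] Hp].
- case: Hp => [Hv [/= Eu Ew]]; have [k Ek] := SE_ex Hv.
  have H : u = uk k by rewrite /uk Ek.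
  exists (Datatypes.inr k), (idG H, Iota w (N0 r)).
  by apply: sig_eq; rewrite /lamV XVact_idG /= Ek Ew.
- simpl in Hp; subst w'; have [i Ei] := SQ_ex p.
  exists (Datatypes.inl i), (Gid None, Iota w (N0 r)).
  by apply: sig_eq; rewrite /= Ei.
Qed.

Lemma Gmor_some u u' (g : Gmor (Some u) (Some u')) : exists H : u = u', g = idG H.
Proof. dependent destruction g; by exists erefl. Qed.

Lemma norm_none w c (f : Vmor (None, w) (dob0 c)) :
  exists i : SQ, lamV c (None, w) f = lamV (Datatypes.inl i) (None, w) (Gid None, Iota w (N0 r)) /\
    forall Y (mu : forall c A, Vmor A (dob0 c) -> ob Y A), @cocone r Cat Dg Y mu ->
      mu c _ f = mu (Datatypes.inl i) (None, w) (Gid None, Iota w (N0 r)).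
Proof.
case: c f => [i|k] [g []]; simpl in g.
- dependent destruction g; by exists i.
- have [i Ei] := SQ_ex (es k).1.1; have [i' Ei'] := SQ_ex (es k).2.
  dependent destruction g.
  + have Hh : homP (Datatypes.inl i) (Datatypes.inr k) false by apply/cbP.
    pose h : Hom (Datatypes.inl i) (Datatypes.inr k) := exist _ false Hh.
    exists i; split.
      symmetry; exact: ((proj2 lamV_cocone) _ _ h (None, w) (Gid None, Iota w (N0 r))).
    move=> Y mu Hmu; symmetry; exact: ((proj2 Hmu) _ _ h (None, w) (Gid None, Iota w (N0 r))).
  + have Hh : homP (Datatypes.inl i') (Datatypes.inr k) true by apply/cbP.
    pose h : Hom (Datatypes.inl i') (Datatypes.inr k) := exist _ true Hh.
    exists i'; split.
      symmetry; exact: ((proj2 lamV_cocone) _ _ h (None, w) (Gid None, Iota w (N0 r))).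
    move=> Y mu Hmu; symmetry; exact: ((proj2 Hmu) _ _ h (None, w) (Gid None, Iota w (N0 r))).
Qed.

Lemma lamV_inr k u w (H : u = uk k) :
  sval (lamV (Datatypes.inr k) (Some u, w) (idG H, Iota w (N0 r))) = (es k, w).
Proof. by subst u. Qed.

Lemma lamV_refl (Y : psh r) (mu : forall c A, Vmor A (dob0 c) -> ob Y A) :
  @cocone r Cat Dg Y mu ->
  forall c c' A (f : Vmor A (dob0 c)) (f' : Vmor A (dob0 c')),
    lamV c A f = lamV c' A f' -> mu c A f = mu c' A f'.
Proof.
move=> Hmu c c' [[u|] w] f f' E.
- case: c f E => [i|k] [g []] E; simpl in g; first by dependent destruction g.
  case: c' f' E => [i'|k'] [g' []] E; simpl in g'; first by dependent destruction g'.
  have [H EH] := Gmor_some g; have [H' EH'] := Gmor_some g'; subst g g'.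
  move: E => /(congr1 sval); rewrite !lamV_inr => /(congr1 fst) /SE_uniq Ek.
  subst k'; by rewrite (eq_irrelevance H' H).
- have [i [Ei Mi]] := norm_none f; have [i' [Ei' Mi']] := norm_none f'.
  rewrite (Mi Y mu Hmu) (Mi' Y mu Hmu).
  rewrite Ei Ei' in E; move: E => /(congr1 (fun x => (sval x).1)) /= /SQ_uniq ->.
  by [].
Qed.

Lemma XV_fin_gen : fin_gen (XV V).
Proof.
exists Cat, Dg, lamV; split; first exact: Cat_is_cat.
split; first exact: Dg_functor.
apply: colim_crit; [exact: lamV_cocone | exact: lamV_surj | ].
move=> Y mu Hmu; exact: lamV_refl.
Qed.

End Fin.

End P1.


Theorem proposition15 (r : nat) (hr : (1 <= r)%N) :
  (forall V : vass r, is_vass V ->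
     is_presheaf (XV V) /\ fin_gen (XV V) /\ no_double_edges (XV V) /\
     vass_iso (VX (XV V)) V) /\
  (forall X : psh r, is_presheaf X -> fin_gen X -> no_double_edges X ->
     is_vass (VX X) /\ psh_iso X (XV (VX X))).
Proof.
split.
- move=> V [[sQ hQ] [sE hE]].
  split; first exact: XV_psh.
  split; first exact: (XV_fin_gen hQ hE).
  split; first exact: XV_nde.
  exact: XV_iso.
- move=> X HX [C [G [lam [_ [_ Hcol]]]]] ND.
  split; first exact: (@VX_vass r X HX C G lam Hcol).
  exists (@th r X); split; first exact: th_nat.
  move=> A; exact: th_bij.
Qed.
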